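(* Let $m\ge 2$ be even, $n\ge 2$, and let $\mathcal{A}$ be a completely positive tensor of order $m$ and dimension $n$. Then $\mathcal{A}$ is positive definite if and only if $\mathcal{A}$ is strongly completely positive.
   Context: For a vector $\mathbf{u}\in\mathbb{R}^n$, $\mathbf{u}^m$ denotes the symmetric $m$th order $n$-dimensional tensor with entries $u_{i_1}\cdots u_{i_m}$. A symmetric $m$th order $n$-dimensional tensor $\mathcal{A}$ is completely positive if there are nonnegative vectors $\mathbf{u}^{(1)},\dots,\mathbf{u}^{(r)}\in\mathbb{R}^n$ with $\mathcal{A}=(\mathbf{u}^{(1)})^m+\dots+(\mathbf{u}^{(r)})^m$; it is strongly completely positive if such a decomposition exists with $\{\mathbf{u}^{(1)},\dots,\mathbf{u}^{(r)}\}$ spanning $\mathbb{R}^n$. For $m$ even, $\mathcal{A}$ is positive definite if $\mathcal{A}\mathbf{x}^m=\sum_{i_1,\dots,i_m}a_{i_1\dots i_m}x_{i_1}\cdots x_{i_m}>0$ for all nonzero $\mathbf{x}\in\mathbb{R}^n$. *)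

(* Defs.v *)
From mathcomp Require Import all_boot all_order all_algebra.
From mathcomp Require Import perm vector.
Set Implicit Arguments. Unset Strict Implicit. Unset Printing Implicit Defensive.
Import Order.TTheory GRing.Theory Num.Theory.
Local Open Scope ring_scope.

Definition tensor (R : realFieldType) (m n : nat) := m.-tuple 'I_n -> R.

Definition symmetric_tensor (R : realFieldType) (m n : nat) (A : tensor R m n) :=
  forall (s : 'S_m) (i : m.-tuple 'I_n),
    A [tuple tnth i (s j) | j < m] = A i.

Definition tpow (R : realFieldType) (m n : nat) (u : 'rV[R]_n) : tensor R m n :=
  fun i => \prod_(j < m) u 0 (tnth i j).

Definition nonneg_vec (R : realFieldType) (n : nat) (u : 'rV[R]_n) :=
  forall j, 0 <= u 0 j.

Definition is_decomp (R : realFieldType) (m n : nat) (A : tensor R m n)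
  (us : seq 'rV[R]_n) :=
  (forall u, u \in us -> nonneg_vec u) /\
  forall i, A i = \sum_(u <- us) @tpow R m n u i.

Definition completely_positive (R : realFieldType) (m n : nat) (A : tensor R m n) :=
  symmetric_tensor A /\ exists us : seq 'rV[R]_n, is_decomp A us.

Definition strongly_completely_positive (R : realFieldType) (m n : nat)
  (A : tensor R m n) :=
  symmetric_tensor A /\
  exists us : seq 'rV[R]_n, is_decomp A us /\ (<<us>>%VS = fullv).

Definition tform (R : realFieldType) (m n : nat) (A : tensor R m n) (x : 'rV[R]_n) : R :=
  \sum_(i : m.-tuple 'I_n) A i * \prod_(j < m) x 0 (tnth i j).

Definition positive_definite (R : realFieldType) (m n : nat) (A : tensor R m n) :=
  forall x : 'rV[R]_n, x != 0 -> 0 < tform A x.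

(* Main.v *)
Require Import Defs.
From mathcomp Require Import all_boot all_order all_algebra.
From mathcomp Require Import perm vector.
Import Order.TTheory GRing.Theory Num.Theory.
Local Open Scope ring_scope.

Definition dotv {R : realFieldType} {n : nat} (u x : 'rV[R]_n) : R :=
  \sum_k u 0 k * x 0 k.

Lemma sum_tuple_prod (R : realFieldType) (m n : nat) (g : 'I_n -> R) :
  \sum_(i : m.-tuple 'I_n) \prod_(j < m) g (tnth i j) = (\sum_k g k) ^+ m.
Proof.
rewrite -[in RHS](card_ord m) -prodr_const bigA_distr_bigA /=.
rewrite (reindex (fun f : {ffun 'I_m -> 'I_n} => [tuple f j | j < m])) /=.
  by apply: eq_bigr => f _; apply: eq_bigr => j _; rewrite tnth_mktuple.
exists (fun t : m.-tuple 'I_n => [ffun j => tnth t j]) => [f _|t _].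
  by apply/ffunP => j; rewrite ffunE tnth_mktuple.
by apply: eq_from_tnth => j; rewrite tnth_mktuple ffunE.
Qed.

Lemma tform_decomp (R : realFieldType) (m n : nat) (A : tensor R m n) (us : seq 'rV[R]_n) (x : 'rV[R]_n) :
  is_decomp A us -> tform A x = \sum_(u <- us) (dotv u x) ^+ m.
Proof.
move=> [_ HA]; rewrite /tform.
under eq_bigr => i _ do rewrite HA big_distrl /=.
rewrite exchange_big /=; apply: eq_bigr => u _.
rewrite -sum_tuple_prod; apply: eq_bigr => i _.
by rewrite /tpow -big_split.
Qed.

Lemma dotv_sum (R : realFieldType) (n p : nat) (c : 'I_p -> R) (v : 'I_p -> 'rV[R]_n) x :
  dotv (\sum_i c i *: v i) x = \sum_i c i * dotv (v i) x.
Proof.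
rewrite /dotv.
under eq_bigr => k _ do rewrite summxE big_distrl /=.
rewrite exchange_big /=; apply: eq_bigr => i _.
by rewrite big_distrr /=; apply: eq_bigr => k _; rewrite mxE mulrA.
Qed.

Lemma dotv_self0 (R : realFieldType) (n : nat) (x : 'rV[R]_n) :
  dotv x x = 0 -> x = 0.
Proof.
move=> H; apply/matrixP => i j; rewrite ord1 mxE.
have H0 : forall k : 'I_n, predT k -> 0 <= x 0 k * x 0 k by move=> k _; rewrite -expr2; exact: sqr_ge0.
have := psumr_eq0P H0 H (i:=j) isT.
by move=> /eqP; rewrite mulf_eq0 orbb => /eqP.
Qed.

Theorem theorem2p2 (R : realFieldType) (m n : nat) (A : tensor R m n) :
  (2 <= m)%N -> ~~ odd m -> (2 <= n)%N ->
  completely_positive A ->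
  (positive_definite A <-> strongly_completely_positive A).
Proof.
move=> hm hev hn [Hsym [us Hus]]; split.
- move=> HPD; split => //; exists us; split => //.
  pose M := \matrix_(i < size us) us`_i.
  case: (boolP (row_full M)) => [/row_fullP [B HB]|Hnf].
    apply/vspaceP => v; rewrite memvf.
    have -> : v = (v *m B) *m M by rewrite -mulmxA HB mulmx1.
    rewrite mulmx_sum_row; apply: memv_suml => i _; apply: memvZ.
    by rewrite rowK; apply: memv_span; apply: mem_nth.
  exfalso.
  have Hr : (\rank M < n)%N.
    by rewrite ltn_neqAle rank_leq_col andbT.
  set K := kermx M^T.
  have HK : K != 0.
    apply/eqP => HK0; move: (mxrank_ker M^T); rewrite -/K HK0 mxrank0 mxrank_tr.
    by move=> /eqP; rewrite eq_sym subn_eq0 leqNgt Hr.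
  have [i Hi] : exists i, row i K != 0.
    apply/existsP; apply: contraR HK => /existsPn H.
    apply/eqP/row_matrixP => i; rewrite row0; exact/eqP/negPn/H.
  set x := row i K.
  have Hx : x *m M^T = 0 by rewrite /x -row_mul mulmx_ker row0.
  have := HPD x Hi; rewrite (@tform_decomp _ _ _ _ _ x Hus) big_seq big1 ?ltxx // => u Hu.
  have Hu' := Hu; rewrite -(nth_index 0 Hu').
  have Hidx : (index u us < size us)%N by rewrite index_mem.
  have := congr1 (fun N : 'M[R]_(1, size us) => N 0 (Ordinal Hidx)) Hx; rewrite !mxE => H0.
  rewrite /dotv.
  have -> : \sum_k us`_(index u us) 0 k * x 0 k = 0.
    apply: (etrans _ H0); apply: eq_bigr => k _; rewrite !mxE mulrC /=.
    by rewrite nth_index.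
  by rewrite expr0n; case: m hm {hev HPD Hus Hsym A}.
- move=> [_ [vs [Hvs Hspan]]] x Hx.
  rewrite (@tform_decomp _ _ _ _ _ x Hvs).
  have [u Hu Hux] : exists2 u, u \in vs & dotv u x != 0.
    apply/(hasP (a := fun u => dotv u x != 0)); apply: contraR Hx => /hasPn H.
    have Hin : x \in <<in_tuple vs>>%VS by rewrite /= Hspan memvf.
    apply/eqP/dotv_self0.
    rewrite {1}(coord_span Hin) dotv_sum big1 // => i _.
    have := H (tnth (in_tuple vs) i) (mem_tnth _ _).
    by rewrite (tnth_nth 0) => /negPn/eqP ->; rewrite mulr0.
  rewrite (big_rem _ Hu) /=.
  apply: ltr_wpDr; first by apply: sumr_ge0 => v _; exact: exprn_even_ge0.
  by rewrite exprn_even_gt0 // Hux orbT.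
Qed.
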